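(* Let $s\ge 1$ be a fixed integer. Consider a sequence of $(s+1)$-tuples of integers $2\le n_0\le n_1\le\dots\le n_s$ (indexed so that $n_s\to\infty$) such that $n_0=(\log n_s)^{\alpha}$ with $\alpha\ge 2\sqrt{\frac{\log n_s}{\log\log n_s}}$. For every $0\le i\le s-1$ let $k_i=\frac{\log n_s}{\log n_i}$, and let $x_0$ be the unique root of the equation $sx-1-\sum_{j=0}^{s-1}x^{\frac{k_j-1}{k_j}}=0$ in the interval $[1,\infty)$. Then $$ch(K_{n_0,\dots,n_s})\ge(1-o(1))\frac{\log n_s}{\log x_0}$$ as $n_s\to\infty$.
   Context: All logarithms are to base 2. For a graph $G=(V,E)$, the choice number $ch(G)$ is the minimum integer $k$ such that for every assignment of a list $S(v)$ of at least $k$ colors to each vertex $v\in V$, there is a proper vertex coloring of $G$ assigning to each vertex $v$ a color from $S(v)$. $K_{n_0,\dots,n_s}$ denotes the complete $(s+1)$-partite graph with parts of sizes $n_0,\dots,n_s$. *)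

(* Defs.v *)
From mathcomp Require Import all_boot.
From Stdlib Require Import Reals ClassicalEpsilon.

Set Implicit Arguments.
Unset Strict Implicit.
Unset Printing Implicit Defensive.

(* Colours
   are natural numbers (lists are finite, so this is no loss of generality). *)
Definition choosable (V : finType) (e : rel V) (k : nat) : Prop :=
  forall S : V -> seq nat,
    (forall v, k <= size (undup (S v))) ->
    exists c : V -> nat,
      (forall v, c v \in S v) /\ (forall u v, e u v -> c u != c v).

Definition choosableb (V : finType) (e : rel V) (k : nat) : bool :=
  if excluded_middle_informative (choosable e k) then true else false.

Definition choice_number (V : finType) (e : rel V) : nat :=
  match excluded_middle_informative (exists k, choosableb e k) with
  | left h => ex_minn h
  | right _ => 0
  end.

(* The complete (s+1)-partite graph K_{n 0, ..., n s}: vertices are pairs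
   (i, a) with i < s+1 and a < n i; two vertices are adjacent iff they lie
   in different parts. *)
Definition Kvert (s : nat) (n : nat -> nat) : finType :=
  {i : 'I_s.+1 & 'I_(n i)}.

Definition Kadj (s : nat) (n : nat -> nat) : rel (Kvert s n) :=
  fun u v => tag u != tag v.

Definition chK (s : nat) (n : nat -> nat) : nat :=
  choice_number (@Kadj s n).

Definition log2 (x : R) : R := (ln x / ln 2)%R.

Fixpoint Rsum (f : nat -> R) (m : nat) : R :=
  match m with
  | O => 0%R
  | S m' => (Rsum f m' + f m')%R
  end.

(* Main.v *)
Require Import Defs.
From mathcomp Require Import all_boot.
From Stdlib Require Import Reals.
From Stdlib Require Import Lra Classical ClassicalEpsilon ZArith Lia.

Set Implicit Arguments. Unset Strict Implicit. Unset Printing Implicit Defensive.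

Lemma notchoos s (n : nat -> nat) k c (om : Kvert s n -> {ffun 'I_k -> 'I_c}) :
 (forall v, injective (om v)) ->
 (forall f : {ffun 'I_c -> 'I_s.+1}, exists v, forall j, f (om v j) != tag v) ->
 ~ choosable (@Kadj s n) k.
Proof.
move=> inj H ch.
case: (ch (fun v => map val (codom (om v)))) => [v|col [Hin Hpr]].
   have U : uniq (map val (codom (om v))).
    rewrite map_inj_uniq; last exact: val_inj.
    by apply/injectiveP; apply: inj.
  by rewrite undup_id // size_map size_codom card_ord.
pose f : {ffun 'I_c -> 'I_s.+1} := [ffun j : 'I_c => if [pick v | col v == val j] is Some v then tag v else ord0].
have [v Hv] := H f.
have /mapP [j' /codomP [a ->] Hcol] := Hin v.
move: (Hv a); rewrite /f ffunE; case: pickP => [u /eqP Hu | none].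
  apply/negP/negPn; apply/eqP; apply/eqP.
  case: (boolP (tag u == tag v)) => // Hne.
  have := Hpr u v Hne; by rewrite Hu Hcol eqxx.
by have := none v; rewrite Hcol eqxx.
Qed.

Lemma union_bound (T I : finType) (A : pred T) (B : I -> pred T) :
  (forall x, A x -> exists i, B i x) -> #|A| <= \sum_i #|B i|.
Proof.
move=> H.
have E1 : #|A| = \sum_(x : T) (A x : nat).
  rewrite -sum1_card big_mkcond /=; apply: eq_bigr => x _. by rewrite unfold_in; case: (A x).
have E2 : \sum_i #|B i| = \sum_i \sum_(x : T) (B i x : nat).
  apply: eq_bigr => i _; rewrite -sum1_card big_mkcond /=.
  by apply: eq_bigr => x _; rewrite unfold_in; case: (B i x).
rewrite E1 E2 exchange_big /=.
apply: leq_sum => x _.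
case Ax: (A x) => //.
have [i Bi] := H x Ax.
by rewrite (bigD1 i) //= Bi.
Qed.

Lemma INR_expn a b : INR (expn a b) = (INR a ^ b)%R.
Proof. elim: b => [|b IH]; first by rewrite expn0. by rewrite expnS mult_INR IH. Qed.

Lemma sumINR_le (I : finType) (F : I -> nat) (b : R) :
  (forall i, INR (F i) <= b)%R -> (INR (\sum_i F i) <= INR #|I| * b)%R.
Proof.
move=> H; rewrite cardE -big_enum /=.
elim: (enum I) => [|x r IH]; first by rewrite big_nil /=; lra.
rewrite big_cons plus_INR (_ : size (x :: r) = (size r).+1) // S_INR.
have := H x; lra.
Qed.

Lemma card_part s (n : nat -> nat) (i : 'I_s.+1) :
  #|[pred v : Kvert s n | tag v == i]| = n i.
Proof.
rewrite -[RHS](card_ord (n i)) -(card_image (f := Tagged (fun i : 'I_s.+1 => 'I_(n i)) (i := i))); last first.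
  exact: eq_from_Tagged.
apply: eq_card => v; rewrite inE.
apply/eqP/imageP => [Hv | [a _ ->] //].
case: v Hv => j a /= Hj; subst j; by exists a.
Qed.

Lemma exp_pow_nat a m : (exp a ^ m = exp (INR m * a))%R.
Proof.
elim: m => [|m IH]; first by rewrite /= Rmult_0_l exp_0.
rewrite -tech_pow_Rmult IH -exp_plus S_INR; f_equal; ring.
Qed.

Lemma exp_le x y : (x <= y)%R -> (exp x <= exp y)%R.
Proof. case=> [h|->]; [left; exact: exp_increasing | right; reflexivity]. Qed.

Lemma ln_le' x y : (0 < x)%R -> (x <= y)%R -> (ln x <= ln y)%R.
Proof. move=> hx; case=> [h|->]; [left; exact: ln_increasing | right; reflexivity]. Qed.

Lemma ln_le_sub1 x : (0 < x)%R -> (ln x <= x - 1)%R.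
Proof. move=> hx; have := exp_ineq1_le (ln x); rewrite exp_ln //; lra. Qed.

Lemma L1 (P Q K : R) (m : nat) : (0 < P)%R -> (0 <= Q <= P)%R -> (K * P <= INR m * Q)%R ->
  ((P - Q) ^ m <= P ^ m * exp (- K))%R.
Proof.
move=> HP HQ HK.
have H1 : (P - Q <= P * exp (- (Q / P)))%R.
  have := exp_ineq1_le (- (Q / P)).
  have -> : (P - Q = P * (1 + - (Q/P)))%R by field; lra.
  move=> h; apply: Rmult_le_compat_l; lra.
apply: Rle_trans (pow_incr _ _ m _) _.
  split; [lra|exact: H1].
rewrite Rpow_mult_distr exp_pow_nat.
apply: Rmult_le_compat_l; first by apply: pow_le; lra.
apply: exp_le.
have : (K <= INR m * Q / P)%R.
  apply/(Rmult_le_reg_r P) => //. by rewrite /Rdiv Rmult_assoc Rinv_l; lra.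
rewrite /Rdiv; lra.
Qed.
Lemma card_family_prod (aT rT : finType) (F : aT -> pred rT) :
  #|[pred f : {ffun aT -> rT} | [forall x, F x (f x)]]| = \prod_x #|F x|.
Proof.
have := card_family (rT := fun _ => rT) F.
rewrite foldrE big_map big_enum /= => <-.
by apply: eq_card => f; rewrite !inE.
Qed.

Lemma count_split c k s (f : {ffun 'I_c -> 'I_s.+1}) (i : 'I_s.+1) :
  #|[pred g : {ffun 'I_k -> 'I_c} | injectiveb g && [exists j, f (g j) == i]]|
  + (c - #|[pred j | f j == i]|) ^_ k = c ^_ k.
Proof.
have E1 : #|[pred g : {ffun 'I_k -> 'I_c} | injectiveb g]| = c ^_ k.
  have := card_inj_ffuns 'I_k 'I_c; rewrite !card_ord => <-.
  by apply: eq_card => g; rewrite !inE.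
have E2 : #|[pred j : 'I_c | f j != i]| = c - #|[pred j | f j == i]|.
  have h := cardC [pred j | f j == i]; rewrite card_ord in h.
  have -> : #|[pred j : 'I_c | f j != i]| = #|[predC [pred j | f j == i]]|.
    by apply: eq_card => j; rewrite !inE.
  move: h; set X := #|_|; set Y := #|_| => h.
  by rewrite -h addKn.
have E3 : #|[pred g : {ffun 'I_k -> 'I_c} | injectiveb g && ~~ [exists j, f (g j) == i]]|
   = (c - #|[pred j | f j == i]|) ^_ k.
  have := card_inj_ffuns_on 'I_k [pred j : 'I_c | f j != i]; rewrite card_ord E2 => <-.
  apply: eq_card => g; rewrite !inE andbC; congr (_ && _).
  rewrite negb_exists; apply/forallP/ffun_onP => H j; have := H j; by rewrite inE.
rewrite -E1 -E3 -(cardID [pred g : {ffun 'I_k -> 'I_c} | [exists j, f (g j) == i]] [pred g : {ffun 'I_k -> 'I_c} | injectiveb g]).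
by congr (_ + _); apply: eq_card => g; rewrite !inE /= // andbC.
Qed.

Lemma pow_addn (x : R) a b : (x ^ (a + b) = x ^ a * x ^ b)%R.
Proof. exact: pow_add. Qed.

Lemma exists_lists s (n : nat -> nat) k c (K : R) :
  k <= c ->
  (forall f : {ffun 'I_c -> 'I_s.+1}, exists i : 'I_s.+1,
      K * INR (c ^_ k) <= INR (n i) * INR ((c - #|[pred j | f j == i]|) ^_ k))%R ->
  (INR s.+1 ^ c * exp (- K) < 1)%R ->
  exists om : Kvert s n -> {ffun 'I_k -> 'I_c},
    (forall v, injective (om v)) /\
    (forall f : {ffun 'I_c -> 'I_s.+1}, exists v, forall j, f (om v j) != tag v).
Proof.
move=> hkc Hf Hexp.
pose V := Kvert s n.
pose Good := [pred om : {ffun V -> {ffun 'I_k -> 'I_c}} | [forall v, injectiveb (om v)]].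
pose Bad (f : {ffun 'I_c -> 'I_s.+1}) := [pred om : {ffun V -> {ffun 'I_k -> 'I_c}} |
   [forall v, injectiveb (om v) && [exists j, f (om v j) == tag v]]].
case: (boolP [exists om : {ffun V -> {ffun 'I_k -> 'I_c}}, Good om &&
   [forall f : {ffun 'I_c -> 'I_s.+1}, [exists v, [forall j, f (om v j) != tag v]]]]).
  case/existsP => om /andP [/forallP G /forallP B].
  exists om; split; first by move=> v; apply/injectiveP; exact: G.
  by move=> f; have /existsP [v /forallP H] := B f; exists v.
move=> Hno; exfalso.
have Hcov : forall om, Good om -> exists f, Bad f om.
  move=> om Gom; move: Hno; rewrite negb_exists => /forallP /(_ om).
  rewrite Gom /= negb_forall => /existsP [f]; rewrite negb_exists => /forallP Hv.
  exists f; apply/forallP => v; rewrite (forallP Gom v) /=.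
  move: (Hv v); rewrite negb_forall => /existsP [j]; rewrite negbK => Hj.
  by apply/existsP; exists j.
have Hub := union_bound Hcov.
have Pgt0 : 0 < c ^_ k by rewrite ffact_gt0.
have cardGood : #|Good| = expn (c ^_ k) #|V|.
  rewrite (card_family_prod (fun _ : V => [pred g : {ffun 'I_k -> 'I_c} | injectiveb g])).
  have E1 : #|[pred g : {ffun 'I_k -> 'I_c} | injectiveb g]| = c ^_ k.
    have := card_inj_ffuns 'I_k 'I_c; rewrite !card_ord => <-.
    by apply: eq_card => g; rewrite !inE.
  by rewrite prod_nat_const E1.
have badB : forall f, (INR #|Bad f| <= INR (expn (c ^_ k) #|V|) * exp (- K))%R.
  move=> f; have [i Hi] := Hf f.
  pose Q := (c - #|[pred j | f j == i]|) ^_ k.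
  pose F := fun v : V => [pred g : {ffun 'I_k -> 'I_c} | injectiveb g && [exists j, f (g j) == tag v]].
  have -> : #|Bad f| = \prod_v #|F v|.
    by rewrite -card_family_prod; apply: eq_card => om; rewrite !inE.
  rewrite (bigID (fun v => tag v == i)) /=.
  have h1 : \prod_(v | tag v == i) #|F v| = expn (c ^_ k - Q) (n i).
    rewrite (eq_bigr (fun _ => c ^_ k - Q)); last first.
      move=> v /eqP hv; rewrite -(count_split k f i) addnK.
      by apply: eq_card => g; rewrite !inE hv.
    rewrite prod_nat_const.
    by rewrite -(card_part n i).
  have h2 : \prod_(v | tag v != i) #|F v| <= expn (c ^_ k) #|[pred v : V | tag v != i]|.
    rewrite -prod_nat_const; apply: leq_prod => v _.
    by rewrite -(count_split k f (tag v)) leq_addr.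
  have hV : #|V| = n i + #|[pred v : V | tag v != i]|.
    have := cardC [pred v : V | tag v == i]; rewrite card_part => <-.
    by congr (_ + _); apply: eq_card => v; rewrite !inE.
  have hQ : Q <= c ^_ k by rewrite -(count_split k f i) leq_addl.
  rewrite h1 mult_INR hV !INR_expn pow_addn minus_INR; last exact/leP.
  have hP : (0 < INR (c ^_ k))%R by apply: lt_0_INR; apply/ltP.
  have hL := L1 (m := n i) hP (conj (pos_INR Q) (le_INR _ _ (elimT leP hQ))) Hi.
  have h2' := le_INR _ _ (elimT leP h2); rewrite INR_expn in h2'.
  have hp1 : (0 <= (INR (c ^_ k) - INR Q) ^ n i)%R.
    apply: pow_le; have := le_INR _ _ (elimT leP hQ); lra.
  have hp2 : (0 <= INR (c ^_ k) ^ n i * exp (- K))%R.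
    apply: Rmult_le_pos; [apply: pow_le; lra | exact: Rlt_le (exp_pos _)].
  apply: Rle_trans (Rmult_le_compat _ _ _ _ hp1 (pos_INR _) hL h2') _.
  right; ring.
have H1 := le_INR _ _ (elimT leP Hub).
have H2 := sumINR_le badB.
have H3 : #|{: {ffun 'I_c -> 'I_s.+1}}| = expn s.+1 c by rewrite card_ffun !card_ord.
rewrite H3 INR_expn in H2.
rewrite cardGood in H1.
have hG : (0 < INR (expn (c ^_ k) #|V|))%R by apply: lt_0_INR; apply/ltP; rewrite expn_gt0 Pgt0.
have : (INR (expn (c ^_ k) #|V|) <= INR (expn (c ^_ k) #|V|) * (INR s.+1 ^ c * exp (- K)))%R.
  apply: Rle_trans H1 _; apply: Rle_trans H2 _; right; ring.
have : (INR (expn (c ^_ k) #|V|) * (INR s.+1 ^ c * exp (- K)) < INR (expn (c ^_ k) #|V|))%R.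
  rewrite -{2}(Rmult_1_r (INR (expn (c ^_ k) #|V|))); exact: Rmult_lt_compat_l.
lra.
Qed.

Lemma Rsum_ext (f g : nat -> R) m : (forall i, (i < m)%nat -> f i = g i) -> Rsum f m = Rsum g m.
Proof.
elim: m => [|m IH] H //=; rewrite IH ?H // => i hi; apply: H; exact: ltnW.
Qed.

Lemma Rsum_lt (f g : nat -> R) m : (0 < m)%nat -> (forall i, (i < m)%nat -> f i < g i)%R -> (Rsum f m < Rsum g m)%R.
Proof.
elim: m => [|m IH] //= _ H.
case: m IH H => [|m] IH H /=.
  have := H 0%nat isT; lra.
have h1 := IH isT (fun i hi => H i (ltnW hi)).
have := H m.+1 (ltnSn _); simpl in h1; lra.
Qed.

Lemma Rsum_le (f g : nat -> R) m : (forall i, (i < m)%nat -> f i <= g i)%R -> (Rsum f m <= Rsum g m)%R.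
Proof.
elim: m => [|m IH] H /=; first lra.
have := H m (ltnSn _); have := IH (fun i hi => H i (ltnW hi)); lra.
Qed.

Lemma Rsum_plus (f g : nat -> R) m : Rsum (fun i => f i + g i)%R m = (Rsum f m + Rsum g m)%R.
Proof. elim: m => [|m IH] /=; [lra | rewrite IH; lra]. Qed.

Lemma Rsum_scal (a : R) (f : nat -> R) m : Rsum (fun i => a * f i)%R m = (a * Rsum f m)%R.
Proof. elim: m => [|m IH] /=; [lra | rewrite IH; lra]. Qed.

Lemma Rsum_const (a : R) m : Rsum (fun _ => a) m = (INR m * a)%R.
Proof. elim: m => [|m IH]; [rewrite /=; lra | rewrite [Rsum _ _]/= IH S_INR; lra]. Qed.

Lemma Rsum_big m (F : nat -> nat) : Rsum (fun i => INR (F i)) m = INR (\sum_(i < m) F i).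
Proof.
elim: m => [|m IH]; first by rewrite big_ord0.
by rewrite big_ord_recr /= plus_INR IH.
Qed.

Lemma sum_preim c s (f : {ffun 'I_c -> 'I_s.+1}) :
  \sum_(i < s.+1) #|[pred j | f j == i]| = c.
Proof.
have -> : \sum_(i < s.+1) #|[pred j | f j == i]| = \sum_(i < s.+1) \sum_(j < c) (f j == i : nat).
  apply: eq_bigr => i _; rewrite -sum1_card big_mkcond /=.
  by apply: eq_bigr => j _; rewrite unfold_in; case: (f j == i).
rewrite exchange_big /= -[RHS](card_ord c) -sum1_card.
apply: eq_bigr => j _.
rewrite (bigD1 (f j)) //= eqxx big1 // => i /negbTE; by rewrite eq_sym => ->.
Qed.

Lemma ffact_lb x k : expn (x - k) k <= x ^_ k.
Proof.
rewrite ffact_prod; apply: (@leq_trans (\prod_(i < k) (x - k))).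
  by rewrite prod_nat_const card_ord.
apply: leq_prod => i _; by apply: leq_sub2l; apply: ltnW.
Qed.

Lemma ffact_ub x k : x ^_ k <= expn x k.
Proof.
rewrite ffact_prod; apply: (@leq_trans (\prod_(i < k) x)).
  apply: leq_prod => i _; exact: leq_subr.
by rewrite prod_nat_const card_ord.
Qed.

Lemma pigeon s c k (n : nat -> nat) (K : R) (tau : nat -> R) :
  (0 < c)%nat ->
  (forall i, (i <= s)%nat -> 0 <= tau i /\ K <= INR (n i) * tau i ^ k)%R ->
  (INR s.+1 * INR k + INR c * Rsum tau s.+1 <= INR s * INR c)%R ->
  forall f : {ffun 'I_c -> 'I_s.+1}, exists i : 'I_s.+1,
    (K * INR (c ^_ k) <= INR (n i) * INR ((c - #|[pred j | f j == i]|) ^_ k))%R.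
Proof.
move=> hc Ht Hsum f.
pose a := fun i : nat => #|[pred j | f j == inord i :> 'I_s.+1]|.
have Ha : Rsum (fun i => INR (a i)) s.+1 = INR c.
  rewrite Rsum_big -(sum_preim f); f_equal; apply: eq_bigr => i _.
  by rewrite /a inord_val.
have [i0 [hi0 Hi0]] : exists i, (i < s.+1)%nat /\ (INR k + INR c * tau i <= INR c - INR (a i))%R.
  apply: NNPP => Hn.
  have : (Rsum (fun i => INR c + (-1) * INR (a i)) s.+1 < Rsum (fun i => INR k + INR c * tau i) s.+1)%R.
    apply: Rsum_lt => // i hi; apply: Rnot_le_lt => h; apply: Hn; exists i; split => //; lra.
  rewrite !Rsum_plus !Rsum_scal !Rsum_const Ha S_INR.
  move: Hsum; rewrite S_INR; nra.
exists (inord i0).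
have [htau hK] := Ht i0 hi0.
have hka : (k + a i0 <= c)%nat.
  apply/leP; apply: INR_le; rewrite plus_INR.
  have := pos_INR c; have : (0 <= INR c * tau i0)%R by apply: Rmult_le_pos => //; exact: pos_INR.
  lra.
have Hd : INR (c - a i0 - k) = (INR c - INR (a i0) - INR k)%R.
  rewrite -subnDA minus_INR; first by rewrite plus_INR; ring.
  by apply/leP; rewrite addnC.
have hq := le_INR _ _ (elimT leP (ffact_lb (c - a i0) k)).
have hp := le_INR _ _ (elimT leP (ffact_ub c k)).
rewrite !INR_expn Hd in hq; rewrite INR_expn in hp.
have hct : (0 <= INR c * tau i0 <= INR c - INR (a i0) - INR k)%R.
  split; [apply: Rmult_le_pos => //; exact: pos_INR | lra].
have hpow := pow_incr _ _ k hct.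
rewrite Rpow_mult_distr in hpow.
have hnt : (0 <= INR (n i0) * tau i0 ^ k)%R.
  apply: Rmult_le_pos; [exact: pos_INR | exact: pow_le].
rewrite inordK //.
have hc0 : (0 < INR c ^ k)%R by apply: pow_lt; apply: lt_0_INR; apply/ltP.
apply: (Rmult_le_reg_r (INR c ^ k)) => //.
apply: Rle_trans (_ : INR (n i0) * tau i0 ^ k * INR (c ^_ k) * INR c ^ k <= _)%R.
  apply: Rmult_le_compat_r; first lra.
  apply: Rmult_le_compat_r => //; exact: pos_INR.
apply: Rle_trans (_ : INR (n i0) * (INR c ^ k * tau i0 ^ k) * INR c ^ k <= _)%R.
  have -> : (INR (n i0) * (INR c ^ k * tau i0 ^ k) * INR c ^ k = INR (n i0) * tau i0 ^ k * INR c ^ k * INR c ^ k)%R by ring.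
  apply: Rmult_le_compat_r; first lra.
  by apply: Rmult_le_compat_l.
apply: Rmult_le_compat_r; first lra.
apply: Rmult_le_compat_l; first exact: pos_INR.
exact: Rle_trans hpow hq.
Qed.

Lemma Rdiv_le0 (a b : R) : (0 <= a)%R -> (0 < b)%R -> (0 <= a / b)%R.
Proof. move=> ha hb; apply: Rmult_le_pos => //; left; exact: Rinv_0_lt_compat. Qed.

Lemma x0_lb (s : nat) (Lam x0 : R) (lj : nat -> R) :
  (1 <= s)%nat -> (0 < Lam)%R -> (forall j, (j < s)%nat -> 0 <= lj j <= Lam)%R -> (1 <= x0)%R ->
  INR s = (/ x0 + Rsum (fun j => exp (- (ln x0 * lj j / Lam))) s)%R ->
  (INR s + 1 <= INR s * x0)%R.
Proof.
move=> hs hL hlj hx eq.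
have hx0 : (0 < x0)%R by lra.
have hln : (0 <= ln x0)%R by rewrite -ln_1; apply: ln_le'; lra.
have : (Rsum (fun _ => / x0) s <= Rsum (fun j => exp (- (ln x0 * lj j / Lam))) s)%R.
  apply: Rsum_le => j hj.
  rewrite -[X in (X <= _)%R](exp_ln (/ x0)); last by apply: Rinv_0_lt_compat.
  rewrite ln_Rinv //; apply: exp_le.
  have [h1 h2] := hlj j hj.
  have hi : (0 < / Lam)%R by apply: Rinv_0_lt_compat.
  have : (Lam * / Lam = 1)%R by field; lra.
  move=> e; have : (lj j * / Lam <= 1)%R by nra.
  rewrite /Rdiv; nra.
rewrite Rsum_const => h.
have e1 : (x0 * / x0 = 1)%R by field; lra.
have h2 : (INR s * / x0 + / x0 <= INR s)%R by lra.
have := Rmult_le_compat_r x0 _ _ (Rlt_le _ _ hx0) h2.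
have -> : ((INR s * / x0 + / x0) * x0 = INR s + 1)%R by field; lra.
lra.
Qed.

Lemma x0_ub (s : nat) (Lam x0 K0 l : R) (lj : nat -> R) :
  (1 <= s)%nat -> (0 < Lam)%R -> (1 <= K0)%R -> (0 < l <= ln x0)%R ->
  (forall j, (j < s)%nat -> Lam <= K0 * lj j)%R -> (1 <= x0)%R ->
  INR s = (/ x0 + Rsum (fun j => exp (- (ln x0 * lj j / Lam))) s)%R ->
  (x0 <= (/ (INR s * l) + 1) * K0)%R.
Proof.
move=> hs hL hK hl hlj hx eq.
have hx0 : (0 < x0)%R by lra.
have hsR : (1 <= INR s)%R by apply: (le_INR 1); apply/leP.
set A := ln x0 in hl eq *.
set w := (A / K0)%R.
have hw : (0 <= w)%R by apply: Rdiv_le0; lra.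
set z := exp (- w).
have hz : (z * (1 + w) <= 1)%R.
  rewrite /z exp_Ropp; have := exp_ineq1_le w; have := exp_pos w => h1 h2.
  apply: (@Rle_trans _ (/ exp w * exp w)%R); last by right; field; lra.
  apply: Rmult_le_compat_l; [left; exact: Rinv_0_lt_compat | lra].
have hz0 : (0 < z)%R by exact: exp_pos.
have : (Rsum (fun j => exp (- (A * lj j / Lam))) s <= Rsum (fun _ => z) s)%R.
  apply: Rsum_le => j hj; apply: exp_le.
  have h := hlj j hj.
  rewrite /w /Rdiv.
  have hi : (0 < / Lam)%R by apply: Rinv_0_lt_compat.
  have hk : (0 < / K0)%R by apply: Rinv_0_lt_compat; lra.
  have e1 : (Lam * / Lam = 1)%R by field; lra.
  have e2 : (K0 * / K0 = 1)%R by field; lra.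
  have : (/ K0 <= lj j * / Lam)%R.
    have := Rmult_le_compat_r (/ K0 * / Lam) _ _ (Rlt_le _ _ (Rmult_lt_0_compat _ _ hk hi)) h.
    have -> : (Lam * (/ K0 * / Lam) = / K0)%R by field; lra.
    have -> : (K0 * lj j * (/ K0 * / Lam) = lj j * / Lam)%R by field; lra.
    done.
  move=> h'; have : (0 <= A)%R by lra.
  nra.
rewrite Rsum_const => h.
have h1 : (INR s * (1 - z) <= / x0)%R by lra.
have h2 : (INR s * x0 * (1 - z) <= 1)%R.
  have := Rmult_le_compat_r x0 _ _ (Rlt_le _ _ hx0) h1.
  have -> : (/ x0 * x0 = 1)%R by field; lra.
  move=> h3; nra.
have h3 : (INR s * x0 * w <= 1 + w)%R.
  have : (INR s * x0 * (1 - z) * (1 + w) <= 1 + w)%R.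
    have := Rmult_le_compat_r (1 + w) _ _ _ h2; lra.
  have : (0 <= INR s * x0)%R by nra.
  nra.
have h4 : (INR s * x0 * A <= K0 + A)%R.
  have := Rmult_le_compat_r K0 _ _ _ h3.
  have -> : (INR s * x0 * w * K0 = INR s * x0 * A)%R by rewrite /w; field; lra.
  have -> : ((1 + w) * K0 = K0 + A)%R by rewrite /w; field; lra.
  move=> h5; apply: h5; lra.
have hsl : (0 < INR s * l)%R by nra.
have e : (INR s * l * / (INR s * l) = 1)%R by field; lra.
have hi : (0 < / (INR s * l))%R by apply: Rinv_0_lt_compat.
apply: NNPP => hn.
have hn' : ((/ (INR s * l) + 1) * K0 < x0)%R by lra.
have : ((/ (INR s * l) + 1) * K0 * (INR s * A) < x0 * (INR s * A))%R.
  apply: Rmult_lt_compat_r => //; nra.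
have : (K0 + A <= (/ (INR s * l) + 1) * K0 * (INR s * A))%R.
  have -> : ((/ (INR s * l) + 1) * K0 * (INR s * A) = K0 * (INR s * A) * / (INR s * l) + K0 * INR s * A)%R by ring.
  have : (K0 <= K0 * (INR s * A) * / (INR s * l))%R.
    have : (INR s * l <= INR s * A)%R by nra.
    move=> hh; have := Rmult_le_compat_r (K0 * / (INR s * l)) _ _ _ hh.
    have -> : (INR s * l * (K0 * / (INR s * l)) = K0)%R by field; lra.
    move=> hh2; have : (0 <= K0 * / (INR s * l))%R by nra.
    move=> hh3; have := hh2 hh3; lra.
  have : (A <= K0 * INR s * A)%R.
    have : (1 <= K0 * INR s)%R by nra.
    have : (0 <= A)%R by lra.
    nra.
  lra.
nra.
Qed.

Lemma exp_small u : (0 <= u <= 1/2)%R -> (exp u <= 1 + 2 * u)%R.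
Proof.
move=> hu.
have h1 := exp_ineq1_le (- u).
have h2 : (exp u * exp (- u) = 1)%R by rewrite -exp_plus Rplus_opp_r exp_0.
have h3 := exp_pos u.
have h4 : (exp u * (1 - u) <= 1)%R.
  rewrite -h2; apply: Rmult_le_compat_l; lra.
nra.
Qed.

Lemma heart (s k : nat) (eps Lam x0 l : R) (lj : nat -> R) :
  (1 <= s)%nat -> (0 < eps <= 1/2)%R -> (0 < Lam)%R -> (1 <= x0)%R -> (0 < l <= ln x0)%R ->
  (0 < k)%nat ->
  (INR k * ln x0 <= (1 - eps) * Lam)%R ->
  (forall j, (j < s)%nat -> 0 <= lj j <= Lam)%R ->
  INR s = (/ x0 + Rsum (fun j => exp (- (ln x0 * lj j / Lam))) s)%R ->
  let K := (INR s.+1 * INR (k * k))%R in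
  let d := (1 - exp (- (eps * l)))%R in
  (2 * INR s.+1 * x0 <= d * INR k)%R ->
  (4 * INR s * x0 * ln K <= d * INR k)%R ->
  (2 * ln K <= INR k)%R ->
  (INR s.+1 * INR k + INR (k * k) * (exp (ln K / INR k) *
     (Rsum (fun j => exp (- (lj j / INR k))) s + exp (- (Lam / INR k)))) <= INR s * INR (k * k))%R.
Proof.
move=> hs he hL hx hl hk hkx hlj eq K d hA hB hC.
have hx0 : (0 < x0)%R by lra.
have hkR : (0 < INR k)%R by apply: lt_0_INR; apply/ltP.
have hsR : (1 <= INR s)%R by apply: (le_INR 1); apply/leP.
have ix : (x0 * / x0 = 1)%R by field; lra.
have ik : (INR k * / INR k = 1)%R by field; lra.
have iL : (Lam * / Lam = 1)%R by field; lra.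
have hix : (0 < / x0)%R by apply: Rinv_0_lt_compat.
have hik : (0 < / INR k)%R by apply: Rinv_0_lt_compat.
have hiL : (0 < / Lam)%R by apply: Rinv_0_lt_compat.
have S1 : (Rsum (fun j => exp (- (lj j / INR k))) s <= INR s - / x0)%R.
  have -> : (INR s - / x0 = Rsum (fun j => exp (- (ln x0 * lj j / Lam))) s)%R by lra.
  apply: Rsum_le => j hj; apply: exp_le.
  have [h1 h2] := hlj j hj.
  have : (ln x0 * / Lam <= / INR k)%R.
    have := Rmult_le_compat_r (/ INR k * / Lam) _ _ _ hkx.
    have -> : (INR k * ln x0 * (/ INR k * / Lam) = ln x0 * / Lam)%R by field; lra.
    have -> : ((1 - eps) * Lam * (/ INR k * / Lam) = (1 - eps) * / INR k)%R by field; lra.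
    move=> h; have := h (Rlt_le _ _ (Rmult_lt_0_compat _ _ hik hiL)); nra.
  rewrite /Rdiv; nra.
have S2 : (exp (- (Lam / INR k)) <= / x0 * (1 - d))%R.
  rewrite /d (_ : (1 - (1 - exp (- (eps * l))) = exp (- (eps * l)))%R); last ring.
  rewrite -(exp_ln x0) // -exp_Ropp -exp_plus; apply: exp_le.
  have : ((1 + eps) * ln x0 <= Lam / INR k)%R.
    have := Rmult_le_compat_r ((1 + eps) * / INR k) _ _ _ hkx.
    have -> : (INR k * ln x0 * ((1 + eps) * / INR k) = (1 + eps) * ln x0)%R by field; lra.
    move=> h; have := h ltac:(nra); rewrite /Rdiv.
    have : (0 <= Lam * / INR k)%R by nra.
    nra.
  nra.
have hK1 : (1 <= K)%R.
  rewrite /K mult_INR; have : (1 <= INR k)%R by apply: (le_INR 1); apply/leP.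
  have : (2 <= INR s.+1)%R by rewrite S_INR; lra.
  nra.
have hlnK : (0 <= ln K)%R by rewrite -ln_1; apply: ln_le'; lra.
set u := (ln K / INR k)%R.
have hu : (0 <= u <= 1/2)%R.
  rewrite /u /Rdiv; split; first nra.
  have := Rmult_le_compat_r (/ INR k) _ _ (Rlt_le _ _ hik) hC.
  have -> : (2 * ln K * / INR k = 2 * (ln K * / INR k))%R by ring.
  lra.
have hE := exp_small hu.
set S := (Rsum (fun j => exp (- (lj j / INR k))) s + exp (- (Lam / INR k)))%R.
have hS0 : (0 <= S)%R.
  rewrite /S; apply: Rplus_le_le_0_compat; last exact: Rlt_le (exp_pos _).
  rewrite -(Rmult_0_r (INR s)) -Rsum_const.
  by apply: Rsum_le => j _; exact: Rlt_le (exp_pos _).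
have hS : (S <= INR s - d * / x0)%R by rewrite /S; lra.
have hd : (0 <= d)%R.
  rewrite /d; have : (exp (- (eps * l)) <= 1)%R.
    rewrite -exp_0; apply: exp_le; nra.
  lra.
have hSs : (S <= INR s)%R by nra.
have hES : (exp u * S <= S + 2 * u * INR s)%R.
  have := Rmult_le_compat_r S _ _ hS0 hE. nra.
have hb : (4 * INR s * x0 * u <= d)%R.
  have := Rmult_le_compat_r (/ INR k) _ _ (Rlt_le _ _ hik) hB.
  have -> : (4 * INR s * x0 * ln K * / INR k = 4 * INR s * x0 * u)%R by rewrite /u /Rdiv; ring.
  have -> : (d * INR k * / INR k = d)%R by field; lra.
  done.
rewrite mult_INR.
have e1 : (INR k * INR k * (S + 2 * u * INR s) <= INR k * INR k * (INR s - d * / x0 + 2 * u * INR s))%R.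
  apply: Rmult_le_compat_l; nra.
have e2 : (INR s.+1 * INR k * (2 * x0) <= d * INR k * INR k)%R.
  have := Rmult_le_compat_r (INR k) _ _ (Rlt_le _ _ hkR) hA; nra.
have e3 : (INR s.+1 * INR k <= d * INR k * INR k * / x0 / 2)%R.
  have := Rmult_le_compat_r (/ x0 / 2) _ _ ltac:(rewrite /Rdiv; nra) e2.
  have -> : (INR s.+1 * INR k * (2 * x0) * (/ x0 / 2) = INR s.+1 * INR k)%R by field; lra.
  by move=> h; apply: Rle_trans h _; right; rewrite /Rdiv; ring.
have e4 : (2 * u * INR s <= d * / x0 / 2)%R.
  have := Rmult_le_compat_r (/ x0 / 2) _ _ ltac:(rewrite /Rdiv; nra) hb.
  have -> : (4 * INR s * x0 * u * (/ x0 / 2) = 2 * u * INR s)%R by field; lra.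
  by move=> h; apply: Rle_trans h _; right; rewrite /Rdiv; ring.
have e5 : (INR k * INR k * (exp u * S) <= INR k * INR k * (S + 2 * u * INR s))%R.
  apply: Rmult_le_compat_l; nra.
have e6 : (INR k * INR k * (2 * u * INR s) <= INR k * INR k * (d * / x0 / 2))%R.
  apply: Rmult_le_compat_l; nra.
nra.
Qed.

Lemma asym (s : nat) (eps l : R) : (1 <= s)%nat -> (0 < eps <= 1/2)%R -> (0 < l)%R ->
  let C := (/ (INR s * l) + 1)%R in
  let d := (1 - exp (- (eps * l)))%R in
  exists T : R, (2 <= T)%R /\ forall (t x0 : R) (k : nat),
    (T <= t)%R -> (1 <= x0)%R -> (l <= ln x0)%R -> (x0 <= C * t ^ 4)%R ->
    (INR k <= (1 - eps) * (ln 2 * t ^ 8) / ln x0 < INR k + 1)%R ->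
    let K := (INR s.+1 * INR (k * k))%R in
    (0 < k)%nat /\ (2 * INR s.+1 * x0 <= d * INR k)%R /\
    (4 * INR s * x0 * ln K <= d * INR k)%R /\ (2 * ln K <= INR k)%R.
Proof.
move=> hs he hl C d.
have hsR : (1 <= INR s)%R by apply: (le_INR 1); apply/leP.
have hl2 := ln_lt_2.
have hsl : (0 < INR s * l)%R by nra.
have hC : (1 <= C)%R by rewrite /C; have := Rinv_0_lt_compat _ hsl; lra.
have hlnC : (0 <= ln C)%R by rewrite -ln_1; apply: ln_le'; lra.
have hd : (0 < d <= 1)%R.
  rewrite /d; have := exp_pos (- (eps * l)).
  have : (exp (- (eps * l)) < 1)%R by rewrite -exp_0; apply: exp_increasing; nra.
  lra.
pose C1 := (ln C + 4)%R.
pose beta := (ln 2 / (2 * C1))%R.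
have hbeta : (0 < beta)%R by rewrite /beta /C1; apply: Rdiv_lt_0_compat; lra.
have hs1 : (0 <= ln (INR s.+1))%R by rewrite -ln_1; apply: ln_le'; [lra | rewrite S_INR; lra].
pose C3 := (ln (INR s.+1) + 2 * (ln 2 / l) + 16)%R.
have hl2l : (0 < ln 2 / l)%R by apply: Rdiv_lt_0_compat; lra.
have hC3 : (16 <= C3)%R by rewrite /C3; lra.
pose M := (2 * INR s.+1 * C + 4 * INR s * C * C3 + 2 * C3 + 1)%R.
have hM : (1 <= M)%R.
  rewrite /M; have : (0 <= INR s.+1)%R by exact: pos_INR.
  have : (0 <= INR s * C * C3)%R by apply: Rmult_le_pos; nra.
  nra.
exists (2 + (M + d) / (d * beta))%R.
have hT0 : (0 <= (M + d) / (d * beta))%R.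
  by apply: Rdiv_le0; [lra | apply: Rmult_lt_0_compat; lra].
split; first lra.
move=> t x0 k ht hx hlx hxC [hk1 hk2] K.
have ht1 : (2 <= t)%R by lra.
have hx0 : (0 < x0)%R by lra.
have hlx0 : (0 < ln x0)%R by lra.
have hdbt : (M + d <= d * beta * t)%R.
  have hdb : (0 < d * beta)%R by nra.
  have : ((M + d) / (d * beta) <= t)%R by lra.
  move=> h; have := Rmult_le_compat_l (d * beta) _ _ (Rlt_le _ _ hdb) h.
  by have -> : (d * beta * ((M + d) / (d * beta)) = M + d)%R by field; lra.
have hlnx : (ln x0 <= C1 * t)%R.
  have : (ln x0 <= ln (C * t ^ 4))%R by apply: ln_le'.
  rewrite ln_mult; [|lra|apply: pow_lt; lra].
  rewrite ln_pow; last lra.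
  have := ln_le_sub1 (x := t) ltac:(lra).
  rewrite /C1 (_ : INR 4 = 4%R); last by rewrite /=; ring.
  nra.
have t5 : (1 <= t ^ 5)%R by rewrite -(pow1 5); apply: pow_incr; lra.
have hv : (beta * t ^ 7 <= (1 - eps) * (ln 2 * t ^ 8) / ln x0)%R.
  have h1 : (/ (C1 * t) <= / ln x0)%R by apply: Rinv_le_contravar.
  have h2 : (0 <= (1 - eps) * (ln 2 * t ^ 8))%R.
    apply: Rmult_le_pos; [lra | apply: Rmult_le_pos; [lra | apply: pow_le; lra]].
  have := Rmult_le_compat_l _ _ _ h2 h1.
  have -> : (beta * t ^ 7 = 1/2 * (ln 2 * t ^ 8) * / (C1 * t))%R by rewrite /beta /C1 /=; field; split; lra.
  have : (0 <= (ln 2 * t ^ 8) * / (C1 * t))%R.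
    apply: Rmult_le_pos; [apply: Rmult_le_pos; [lra | apply: pow_le; lra] | left; apply: Rinv_0_lt_compat; rewrite /C1; nra].
  rewrite /Rdiv; nra.
have hdk : (M * t ^ 5 <= d * INR k)%R.
  have h7 : (beta * t ^ 7 - 1 < INR k)%R by lra.
  have e7 : (t ^ 7 = t * t * t ^ 5)%R by rewrite /=; ring.
  have : (d * (beta * t ^ 7 - 1) <= d * INR k)%R by apply: Rmult_le_compat_l; lra.
  have : ((M + d) * t ^ 5 <= d * beta * t * t ^ 5)%R by apply: Rmult_le_compat_r; lra.
  have : (d * beta * t * t ^ 5 <= d * beta * t * t * t ^ 5)%R.
    have : (0 <= d * beta * t * t ^ 5)%R by apply: Rmult_le_pos; lra.
    nra.
  rewrite e7; nra.
have hkpos : (0 < INR k)%R by nra.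
have hk0 : (0 < k)%nat by apply/ltP; apply: INR_lt; rewrite /=; lra.
have hk1' : (1 <= INR k)%R by apply: (le_INR 1); apply/leP.
have hkub : (INR k <= ln 2 / l * t ^ 8)%R.
  apply: Rle_trans hk1 _.
  have h1 : (/ ln x0 <= / l)%R by apply: Rinv_le_contravar.
  have h2 : (0 <= ln 2 * t ^ 8)%R by apply: Rmult_le_pos; [lra | apply: pow_le; lra].
  have := Rmult_le_compat_l _ _ _ h2 h1.
  have : (0 <= ln 2 * t ^ 8 * / ln x0)%R by apply: Rmult_le_pos => //; left; apply: Rinv_0_lt_compat.
  rewrite /Rdiv; nra.
have hlnk : (ln (INR k) <= ln 2 / l + 8 * t)%R.
  have : (ln (INR k) <= ln (ln 2 / l * t ^ 8))%R by apply: ln_le'.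
  rewrite ln_mult //; last by apply: pow_lt; lra.
  rewrite ln_pow; last lra.
  have := ln_le_sub1 (x := t) ltac:(lra).
  have := ln_le_sub1 hl2l.
  rewrite (_ : INR 8 = 8%R); last by rewrite /=; ring.
  lra.
have hlnK : (ln K <= C3 * t)%R.
  rewrite /K mult_INR ln_mult; [| rewrite S_INR; lra | nra].
  rewrite ln_mult //.
  rewrite /C3; nra.
have hlnK0 : (0 <= ln K)%R.
  rewrite -ln_1; apply: ln_le'; first lra.
  rewrite /K mult_INR S_INR; nra.
have t4 : (t ^ 4 * t = t ^ 5)%R by rewrite /=; ring.
have t41 : (1 <= t ^ 4)%R by rewrite -(pow1 4); apply: pow_incr; lra.
have t45 : (t ^ 4 <= t ^ 5)%R by rewrite -t4; nra.
have t15 : (t <= t ^ 5)%R by rewrite -t4; nra.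
have hP1 : (0 <= 4 * INR s * C * C3)%R.
  repeat apply: Rmult_le_pos; lra.
have hP2 : (0 <= 2 * INR s.+1 * C)%R.
  repeat apply: Rmult_le_pos; try lra; exact: pos_INR.
split => //; split; last split.
- have : (2 * INR s.+1 * x0 <= 2 * INR s.+1 * C * t ^ 4)%R.
    have := pos_INR s.+1; nra.
  have : (0 <= 4 * INR s * C * C3 * t ^ 5)%R by apply: Rmult_le_pos; lra.
  have : (0 <= 2 * C3 * t ^ 5)%R by nra.
  have : (2 * INR s.+1 * C * t ^ 4 <= 2 * INR s.+1 * C * t ^ 5)%R.
    have := pos_INR s.+1; nra.
  rewrite /M in hdk; nra.
- have : (4 * INR s * x0 * ln K <= 4 * INR s * (C * t ^ 4) * (C3 * t))%R.
    apply: Rmult_le_compat; try nra.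
  have : (2 * INR s.+1 * C * t ^ 5 >= 0)%R by have := pos_INR s.+1; nra.
  have : (2 * C3 * t ^ 5 >= 0)%R by nra.
  have : (4 * INR s * (C * t ^ 4) * (C3 * t) = 4 * INR s * C * C3 * (t ^ 4 * t))%R by ring.
  have : (0 <= 4 * INR s * C * C3)%R by nra.
  rewrite /M in hdk; nra.
- have : (2 * C3 * t <= 2 * C3 * t ^ 5)%R by nra.
  have : (0 <= 4 * INR s * C * C3 * t ^ 5)%R by apply: Rmult_le_pos; lra.
  have : (0 <= 2 * INR s.+1 * C * t ^ 5)%R by have := pos_INR s.+1; nra.
  have : (d * INR k <= INR k)%R by nra.
  rewrite /M in hdk; nra.
Qed.

Lemma fresh_elem (a b : seq nat) : size b < size (undup a) -> exists y, y \in a /\ y \notin b.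
Proof.
move=> H; apply: NNPP => Hn.
have sub : {subset undup a <= b}.
  move=> y; rewrite mem_undup => ya; apply: NNPP => yb; apply: Hn; exists y; split => //.
  by apply/negP.
have := uniq_leq_size (undup_uniq a) sub.
by rewrite leqNgt H.
Qed.

Lemma greedy (V : finType) (S : V -> seq nat) (r : seq V) :
  (forall v, size r <= size (undup (S v))) ->
  exists c : V -> nat, (forall v, v \in r -> c v \in S v) /\
     (forall u v, u \in r -> v \in r -> u != v -> c u != c v).
Proof.
elim: r => [|x r IH] H.
  by exists (fun _ => 0); split.
have [c' [H1 H2]] : exists c : V -> nat, (forall v, v \in r -> c v \in S v) /\
     (forall u v, u \in r -> v \in r -> u != v -> c u != c v).
  apply: IH => v; apply: leq_trans (H v); exact: leqnSn.
have [y [yS yn]] : exists y, y \in S x /\ y \notin map c' r.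
  apply: fresh_elem; rewrite size_map; exact: H x.
exists (fun v => if v == x then y else c' v); split.
  move=> v; rewrite inE; case: eqP => [-> //|_] /= vr; exact: H1.
move=> u v; rewrite !inE.
case: (eqVneq u x) => [->|ux]; case: (eqVneq v x) => [->|vx] //= ur vr neq.
- by apply/eqP => e; move: yn; rewrite e map_f.
- by apply/eqP => e; move: yn; rewrite -e map_f.
- exact: H2.
Qed.

Lemma choosable_card (V : finType) (e : rel V) :
  (forall u v, e u v -> u != v) -> choosable e #|V|.
Proof.
move=> He S HS.
have hsz : forall v, size (enum V) <= size (undup (S v)) by move=> v; rewrite -cardE; exact: HS v.
have [c [H1 H2]] := greedy hsz.
exists c; split.
  move=> v; apply: H1; by rewrite mem_enum.
move=> u v huv; apply: H2; rewrite ?mem_enum //; exact: He.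
Qed.

Lemma choosable_mono (V : finType) (e : rel V) j k :
  (j <= k)%nat -> choosable e j -> choosable e k.
Proof.
move=> hjk H S HS; apply: H => v; exact: leq_trans hjk (HS v).
Qed.

Lemma chK_ge (s : nat) (n : nat -> nat) (k : nat) :
  ~ choosable (@Kadj s n) k -> (k < chK s n)%nat.
Proof.
move=> Hk.
rewrite /chK /choice_number.
case: excluded_middle_informative => [h|h]; last first.
  exfalso; apply: h; exists #|Kvert s n|.
  rewrite /choosableb; case: excluded_middle_informative => // hn; exfalso; apply: hn.
  apply: choosable_card => u v; rewrite /Kadj => huv; apply/eqP => e; move: huv; by rewrite e eqxx.
case: ex_minnP => m hm _.
rewrite ltnNge; apply/negP => hmk; apply: Hk.
apply: (choosable_mono hmk).
move: hm; rewrite /choosableb; by case: excluded_middle_informative.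
Qed.

Lemma floor_nat (v : R) : (0 <= v)%R -> exists k : nat, (INR k <= v < INR k + 1)%R.
Proof.
move=> hv.
have [h1 h2] := archimed v.
have hz : (0 <= up v - 1)%Z.
  have : (-1 < up v - 1)%Z by apply: lt_IZR; rewrite minus_IZR /=; lra.
  lia.
exists (Z.to_nat (up v - 1)).
rewrite INR_IZR_INZ Z2Nat.id // minus_IZR /=; lra.
Qed.

Lemma nat_above (r : R) : exists N : nat, (r <= INR N)%R.
Proof.
have [k [hk1 hk2]] := floor_nat (Rmax_l 0 r).
exists k.+1; rewrite S_INR; have := Rmax_r 0 r; lra.
Qed.

Lemma sqrt_lb X Y Z : (0 <= X)%R -> (0 <= Y)%R -> (0 <= Z)%R -> (Z ^ 2 <= X * Y ^ 2)%R -> (Z <= sqrt X * Y)%R.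
Proof.
move=> hX hY hZ h.
rewrite -(sqrt_pow2 Y) // -sqrt_mult_alt // -(sqrt_pow2 Z) //.
exact: sqrt_le_1_alt.
Qed.

Lemma mono_n (s : nat) (n : nat -> nat) :
  (forall i, (i < s)%nat -> (n i <= n i.+1)%nat) -> forall i j, (i <= j)%nat -> (j <= s)%nat -> (n i <= n j)%nat.
Proof.
move=> H i; elim=> [|j IH] hij hjs.
  by move: hij; rewrite leqn0 => /eqP ->.
move: hij; rewrite leq_eqVlt => /orP [/eqP -> //|hij].
apply: leq_trans (IH hij (ltnW hjs)) (H j hjs).
Qed.

Unset Implicit Arguments.

Theorem theorem6 (s : nat) (hs : (1 <= s)%nat) (eps : R) (heps : (0 < eps)%R) :
  exists N : nat,
  forall n : nat -> nat,
    (2 <= n 0)%nat ->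
    (forall i, (i < s)%nat -> (n i <= n i.+1)%nat) ->
    (N <= n s)%nat ->
    forall alpha : R,
      INR (n 0) = Rpower (log2 (INR (n s))) alpha ->
      (alpha >= 2 * sqrt (log2 (INR (n s)) / log2 (log2 (INR (n s)))))%R ->
    let k := fun j : nat => (log2 (INR (n s)) / log2 (INR (n j)))%R in
    forall x0 : R,
      (1 <= x0)%R ->
      (INR s * x0 - 1 - Rsum (fun j => Rpower x0 ((k j - 1) / k j)) s = 0)%R ->
      ((1 - eps) * (log2 (INR (n s)) / log2 x0) <= INR (chK s n))%R.
Proof.
pose e' := Rmin eps (1/2).
have he' : (0 < e' <= 1/2)%R.
  split; [apply: Rmin_glb_lt; lra | exact: Rmin_r].
have hee : (e' <= eps)%R by exact: Rmin_l.
have hsR : (1 <= INR s)%R by apply: (le_INR 1); apply/leP.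
pose l := ln (INR s.+1 / INR s).
have hl : (0 < l)%R.
  rewrite /l -ln_1; apply: ln_increasing; first lra.
  rewrite S_INR; apply/Rlt_gt/(Rmult_lt_reg_r (INR s)); first lra.
  rewrite /Rdiv Rmult_assoc Rinv_l; lra.
have [T [hT HT]] := asym hs he' hl.
have [N hN] := nat_above (exp (ln 2 * T ^ 8)).
exists N => n hn0 hmono hNs alpha halpha hal kk x0 hx0 heq.
have hl2 := ln_lt_2.
have mono := @mono_n s n hmono.
have hn0R : (2 <= INR (n 0%nat))%R by apply: (le_INR 2); apply/leP.
have hnj : forall j, (j <= s)%nat -> (2 <= INR (n j) <= INR (n s))%R.
  move=> j hj; split.
    apply: Rle_trans hn0R _; apply: le_INR; apply/leP; exact: mono.
  apply: le_INR; apply/leP; exact: mono.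
have hns := hnj s (leqnn s).
pose Lam := ln (INR (n s)).
have hLamT : (ln 2 * T ^ 8 <= Lam)%R.
  rewrite -[X in (X <= _)%R]ln_exp; apply: ln_le'; first exact: exp_pos.
  apply: Rle_trans hN _; apply: le_INR; exact/leP.
pose L := log2 (INR (n s)).
have hLdef : L = (Lam / ln 2)%R by [].
have hT0 : (0 < T)%R by lra.
have hT8 : (256 <= T ^ 8)%R.
  have -> : (256 = 2 ^ 8)%R by rewrite /=; ring.
  apply: pow_incr; lra.
have hL : (T ^ 8 <= L)%R.
  rewrite hLdef; apply/(Rmult_le_reg_r (ln 2)); first lra.
  rewrite /Rdiv Rmult_assoc Rinv_l; lra.
have hL0 : (0 < L)%R by lra.
pose t := exp (ln L / 8).
have ht8 : (t ^ 8 = L)%R.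
  rewrite /t exp_pow_nat (_ : (INR 8 * (ln L / 8) = ln L)%R); first exact: exp_ln.
  rewrite /=; field.
have htT : (T <= t)%R.
  rewrite -(exp_ln T) //; apply: exp_le.
  have : (ln (T ^ 8) <= ln L)%R by apply: ln_le' => //; apply: pow_lt.
  rewrite ln_pow // (_ : INR 8 = 8%R); last by rewrite /=; ring.
  lra.
have hLam : Lam = (ln 2 * t ^ 8)%R.
  rewrite ht8 hLdef; field; lra.
have hlnL : (ln 2 <= ln L)%R by apply: ln_le'; lra.
have hln0 : ln (INR (n 0%nat)) = (alpha * ln L)%R by rewrite halpha /Rpower ln_exp.
have ht4 : (0 <= t ^ 4)%R by apply: pow_le; lra.
have hsq : (ln 2 * t ^ 4 <= sqrt (L / log2 L) * ln L)%R.
  apply: sqrt_lb; try lra.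
  - rewrite /log2; apply: Rdiv_le0; first lra.
    apply: Rdiv_lt_0_compat; lra.
  - apply: Rmult_le_pos; lra.
  - have -> : (L / log2 L * ln L ^ 2 = L * ln 2 * ln L)%R by rewrite /log2; field; lra.
    have -> : ((ln 2 * t ^ 4) ^ 2 = ln 2 * ln 2 * t ^ 8)%R by rewrite /=; ring.
    rewrite ht8.
    have : (0 <= L * ln 2)%R by nra.
    nra.
have hlj0 : (2 * ln 2 * t ^ 4 <= ln (INR (n 0%nat)))%R.
  rewrite hln0.
  change (alpha >= 2 * sqrt (L / log2 L))%R in hal.
  have : (2 * sqrt (L / log2 L) * ln L <= alpha * ln L)%R.
    apply: Rmult_le_compat_r; lra.
  lra.
pose lj := fun j => ln (INR (n j)).
have hlj : forall j, (j <= s)%nat -> (2 * ln 2 * t ^ 4 <= lj j <= Lam)%R.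
  move=> j hj; have [h1 h2] := hnj j hj; split.
    apply: Rle_trans hlj0 _; apply: ln_le'; first lra.
    apply: le_INR; apply/leP; exact: mono.
  by apply: ln_le'; lra.
have hLam0 : (0 < Lam)%R.
  rewrite hLam; apply: Rmult_lt_0_compat; first lra.
  apply: pow_lt; lra.
have heq' : INR s = (/ x0 + Rsum (fun j => exp (- (ln x0 * lj j / Lam))) s)%R.
  have hx00 : (0 < x0)%R by lra.
  have E : Rsum (fun j => Rpower x0 ((kk j - 1) / kk j)) s = (x0 * Rsum (fun j => exp (- (ln x0 * lj j / Lam))) s)%R.
    rewrite -Rsum_scal; apply: Rsum_ext => j hj.
    have [h1 h2] := hlj j (ltnW hj).
    have hlj0' : (0 < lj j)%R by have := pow_le t 4; nra.
    rewrite /Rpower /kk.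
    have -> : ((log2 (INR (n s)) / log2 (INR (n j)) - 1) / (log2 (INR (n s)) / log2 (INR (n j))) = 1 - lj j / Lam)%R.
      rewrite /log2; change (ln (INR (n j))) with (lj j); change (ln (INR (n s))) with Lam.
      field; repeat split; lra.
    rewrite -{2}(exp_ln x0) // -exp_plus; congr exp; field; lra.
  rewrite E in heq.
  have : (INR s * x0 = 1 + x0 * Rsum (fun j => exp (- (ln x0 * lj j / Lam))) s)%R by lra.
  move=> h; apply: (Rmult_eq_reg_r x0); last lra.
  rewrite h; field; lra.
have hlj' : forall j, (j < s)%nat -> (0 <= lj j <= Lam)%R.
  move=> j hj; have [h1 h2] := hlj j (ltnW hj); split => //.
  have := pow_le t 4; nra.
have hxlb := x0_lb hs hLam0 hlj' hx0 heq'.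
have hlx : (l <= ln x0)%R.
  apply: ln_le'.
    apply: Rdiv_lt_0_compat; [rewrite S_INR|]; lra.
  apply/(Rmult_le_reg_r (INR s)); first lra.
  rewrite /Rdiv Rmult_assoc Rinv_l; last lra.
  rewrite S_INR; lra.
have ht2 : (2 <= t)%R by lra.
have ht16 : (16 <= t ^ 4)%R.
  have -> : (16 = 2 ^ 4)%R by rewrite /=; ring.
  apply: pow_incr; lra.
have hK0 : forall j, (j < s)%nat -> (Lam <= t ^ 4 / 2 * lj j)%R.
  move=> j hj; have [h1 h2] := hlj j (ltnW hj).
  rewrite hLam (_ : (t ^ 8 = t ^ 4 * t ^ 4)%R); last by rewrite -pow_add.
  nra.
have hxub := x0_ub (K0 := (t ^ 4 / 2)%R) hs hLam0 ltac:(lra) (conj hl hlx) hK0 hx0 heq'.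
have hC0 : (0 <= / (INR s * l) + 1)%R.
  have : (0 < / (INR s * l))%R by apply: Rinv_0_lt_compat; nra.
  lra.
have hxC : (x0 <= (/ (INR s * l) + 1) * t ^ 4)%R by nra.
have hlx0 : (0 < ln x0)%R by lra.
have [k [hk1 hk2]] := floor_nat (v := ((1 - e') * (ln 2 * t ^ 8) / ln x0)%R)
  ltac:(apply: Rdiv_le0 => //; apply: Rmult_le_pos; [lra | apply: Rmult_le_pos; [lra | apply: pow_le; lra]]).
have [hk0 [hA [hB hCc]]] := HT t x0 k htT hx0 hlx hxC (conj hk1 hk2).
have hkx : (INR k * ln x0 <= (1 - e') * Lam)%R.
  have := Rmult_le_compat_r (ln x0) _ _ (Rlt_le _ _ hlx0) hk1.
  rewrite hLam /Rdiv Rmult_assoc Rinv_l; lra.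
have Hheart := heart hs he' hLam0 hx0 (conj hl hlx) hk0 hkx hlj' heq' hA hB hCc.
pose c := (k * k)%nat.
pose K := (INR s.+1 * INR c)%R.
have hkR : (0 < INR k)%R by apply: lt_0_INR; apply/ltP.
have hc0 : (0 < c)%nat by rewrite /c muln_gt0 hk0.
have hcR : (0 < INR c)%R by apply: lt_0_INR; apply/ltP.
have hs1 : (2 <= INR s.+1)%R by rewrite S_INR; lra.
have hK : (0 < K)%R by rewrite /K; nra.
pose tau := fun i => exp ((ln K - lj i) / INR k).
have Ht : forall i, (i <= s)%nat -> (0 <= tau i /\ K <= INR (n i) * tau i ^ k)%R.
  move=> i hi; split; first exact: Rlt_le (exp_pos _).
  have [h1 h2] := hnj i hi.
  rewrite /tau exp_pow_nat (_ : (INR k * ((ln K - lj i) / INR k) = ln K + - lj i)%R); last by field; lra.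
  rewrite exp_plus exp_Ropp exp_ln // /lj exp_ln; last lra.
  right; field; lra.
have Hsum : (INR s.+1 * INR k + INR c * Rsum tau s.+1 <= INR s * INR c)%R.
  have -> : Rsum tau s.+1 = (exp (ln K / INR k) * (Rsum (fun j => exp (- (lj j / INR k))) s + exp (- (Lam / INR k))))%R.
    rewrite [Rsum tau s.+1]/= Rmult_plus_distr_l -Rsum_scal.
    have ee : forall i, tau i = (exp (ln K / INR k) * exp (- (lj i / INR k)))%R.
      by move=> i; rewrite /tau -exp_plus; congr exp; field; lra.
    rewrite ee; congr Rplus; apply: Rsum_ext => i _; exact: ee.
  exact: Hheart.
have Hf := pigeon hc0 Ht Hsum.
have Hexp : (INR s.+1 ^ c * exp (- K) < 1)%R.
  rewrite -{1}(exp_ln (INR s.+1)); last lra.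
  rewrite exp_pow_nat -exp_plus -exp_0; apply: exp_increasing.
  have := ln_le_sub1 (x := INR s.+1) ltac:(lra).
  rewrite /K; nra.
have hkc : (k <= c)%nat by rewrite /c leq_pmulr.
have [om [Hinj Hom]] := exists_lists hkc Hf Hexp.
have Hnc := notchoos Hinj Hom.
have Hch := chK_ge Hnc.
have hchR : (INR k + 1 <= INR (chK s n))%R.
  rewrite -S_INR; apply: le_INR; exact/leP.
have -> : (log2 (INR (n s)) / log2 x0 = Lam / ln x0)%R.
  rewrite /log2; change (ln (INR (n s))) with Lam; field; lra.
have : ((1 - eps) * (Lam / ln x0) <= (1 - e') * (Lam / ln x0))%R.
  apply: Rmult_le_compat_r; last lra.
  apply: Rdiv_le0; lra.
rewrite hLam in hk2 *.
rewrite /Rdiv in hk2 *.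
lra.
Qed.
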